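(* Let $f\in\mathbb{R}[X_1,\dots,X_n]$ be a non-constant polynomial of degree $2d$ such that $|\alpha|<2d$ for each $\alpha\in\Delta$ and $f_{2d,i}>0$ for $i=1,\dots,n$. Let $$k\ \ge\ \max_{i=1,\dots,n} C\Big(t^{2d}-\frac{1}{2d}\sum_{\alpha\in\Delta}\alpha_i|f_{\alpha}|f_{2d,i}^{-\frac{|\alpha|}{2d}}t^{|\alpha|}\Big)$$ and $$r_L:=f_0-\frac{1}{2d}\sum_{\alpha\in\Delta}(2d-|\alpha|)|f_{\alpha}|k^{|\alpha|}(f_{2d}^{-\alpha})^{\frac{1}{2d}}.$$ Then $f_{gp}\ge r_L$.
   Context: $\mathbb{N}=\{0,1,2,\dots\}$. For $\alpha\in\mathbb{N}^n$ write $\underline{X}^\alpha=X_1^{\alpha_1}\cdots X_n^{\alpha_n}$, $|\alpha|=\sum_i\alpha_i$, and for $a\in\mathbb{R}^n$, $a^{\alpha}=\prod_i a_i^{\alpha_i}$ with $0^0=1$. For $f=\sum_\alpha f_\alpha\underline{X}^\alpha$ of degree $2d$: $f_0$ constant term, $f_{2d,i}$ coefficient of $X_i^{2d}$, $f_{2d}^{-\alpha}:=\prod_{i=1}^n f_{2d,i}^{-\alpha_i}$, $\Omega=\{\alpha: f_\alpha\ne0\}\setminus\{\underline{0},2d\epsilon_1,\dots,2d\epsilon_n\}$, $\Delta=\{\alpha\in\Omega:\ f_\alpha<0\text{ or }\alpha_i\text{ odd for some }i\}$, $\Delta^{<2d}=\{\alpha\in\Delta:|\alpha|<2d\}$. $f_{gp}$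 is the supremum (with $\sup\emptyset=-\infty$) of all $r\in\mathbb{R}$ for which there exist reals $a_{\alpha,i}\ge0$ ($\alpha\in\Delta$, $i=1,\dots,n$), $a_{\alpha,i}=0$ iff $\alpha_i=0$, with, for $a_\alpha=(a_{\alpha,1},\dots,a_{\alpha,n})$: (1) $(2d)^{2d}a_\alpha^\alpha=|f_\alpha|^{2d}\alpha^\alpha$ for $\alpha\in\Delta$, $|\alpha|=2d$; (2) $f_{2d,i}\ge\sum_{\alpha\in\Delta}a_{\alpha,i}$ for all $i$; (3) $f_0-r\ge\sum_{\alpha\in\Delta^{<2d}}(2d-|\alpha|)\big[\frac{|f_\alpha|^{2d}\alpha^\alpha}{(2d)^{2d}a_\alpha^\alpha}\big]^{1/(2d-|\alpha|)}$. For a univariate polynomial $p(t)=t^N-\sum_{j=0}^{N-1}c_jt^j$ with all $c_j\ge0$ and at least one $c_j\neq0$, $C(p)$ denotes the unique positive root of $p$; by convention $C(t^N):=0$. *)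

(* Defs.v *)
From mathcomp Require Import all_boot all_order all_algebra.
From mathcomp Require Import mpoly.
From mathcomp Require Import all_classical all_reals all_analysis.
Set Implicit Arguments. Unset Strict Implicit. Unset Printing Implicit Defensive.
Import Order.TTheory GRing.Theory Num.Theory.
Local Open Scope ring_scope.


Section GP.
Context {R : realType} {n : nat}.
Implicit Types (f : mpoly.mpoly n R) (a : mpoly.multinom n) (d : nat).

Definition mabs a : nat := mpoly.mdeg a.

Definition fcoef f a : R := mpoly.mcoeff a f.
Definition fconst f : R := mpoly.mcoeff mpoly.mnm0 f.
Definition e2d d (i : 'I_n) : mpoly.multinom n := mpoly.mnm_muln (mpoly.mnm1 i) (2 * d).
Definition flead f d (i : 'I_n) : R := mpoly.mcoeff (e2d d i) f.

Definition inOmega f d a : bool :=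
  [&& a \in mpoly.msupp f, a != mpoly.mnm0 & [forall i, a != e2d d i]].

Definition inDelta f d a : bool :=
  inOmega f d a && ((fcoef f a < 0) || [exists i, odd (a i)]).

Definition Delta f d : seq (mpoly.multinom n) := seq.filter (inDelta f d) (mpoly.msupp f).

(* x^alpha = prod_i x_i^alpha_i  (nat powers, so 0^0 = 1) *)
Definition monpow (x : 'I_n -> R) a : R := \prod_(i < n) x i ^+ a i.

Definition selfpow a : R := monpow (fun i => (a i)%:R) a.

Definition gp_feasible f d (r : R) : Prop :=
  exists A : mpoly.multinom n -> 'I_n -> R,
    (forall a, a \in Delta f d -> forall i,
        0 <= A a i /\ (A a i = 0 <-> a i = 0%N)) /\
    (* (1) *)
    (forall a, a \in Delta f d -> mabs a = (2 * d)%N ->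
        (2 * d)%:R ^+ (2 * d) * monpow (A a) a
        = `|fcoef f a| ^+ (2 * d) * selfpow a) /\
    (* (2) *)
    (forall i, \sum_(a <- Delta f d) A a i <= flead f d i) /\
    (* (3) *)
    (\sum_(a <- Delta f d | (mabs a < 2 * d)%N)
        ((2 * d - mabs a)%N)%:R *
        powR ((`|fcoef f a| ^+ (2 * d) * selfpow a)
                / ((2 * d)%:R ^+ (2 * d) * monpow (A a) a))
             (((2 * d - mabs a)%N)%:R)^-1
      <= fconst f - r).

(* f_gp = sup of feasible r, in the extended reals (sup emptyset = -oo) *)
Definition f_gp f d : \bar R := ereal_sup [set (r%:E)%E | r in gp_feasible f d].

(* C(p): the unique positive root of p (0 if p has no positive root,
   which covers the convention C(t^N) = 0). *)
Definition Croot (p : {poly R}) : R := xget 0 [set t | 0 < t /\ root p t].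

Definition Cpoly f d (i : 'I_n) : {poly R} :=
  'X^(2 * d) -
  \sum_(a <- Delta f d)
     (((2 * d)%:R)^-1 * (a i)%:R * `|fcoef f a|
        * powR (flead f d i) (- ((mabs a)%:R / (2 * d)%:R))) *: 'X^(mabs a).

Definition leadinvpow f d a : R := \prod_(i < n) flead f d i ^- a i.

Definition rL f d (k : R) : R :=
  fconst f - ((2 * d)%:R)^-1 *
    \sum_(a <- Delta f d)
       ((2 * d - mabs a)%N)%:R * `|fcoef f a| * k ^+ mabs a
         * powR (leadinvpow f d a) ((2 * d)%:R)^-1.

End GP.

(* Main.v *)
Require Import Defs.
From mathcomp Require Import all_boot all_order all_algebra.
From mathcomp Require Import mpoly.
From mathcomp Require Import all_classical all_reals all_analysis.
From mathcomp Require Import polyrcf.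
From mathcomp Require Import ring lra.
Import Order.TTheory GRing.Theory Num.Theory.
Local Open Scope ring_scope.

Section Key.
Variables (R : realType) (T : eqType).

Lemma sum_ge0_mem (s : seq T) (F : T -> R) :
  (forall x, x \in s -> 0 <= F x) -> 0 <= \sum_(x <- s) F x.
Proof. by move=> H; rewrite big_seq sumr_ge0. Qed.

Lemma le_sum_mem (s : seq T) (F : T -> R) x0 :
  (forall x, x \in s -> 0 <= F x) -> x0 \in s -> F x0 <= \sum_(x <- s) F x.
Proof.
elim: s => [|y s IH] //= H; rewrite in_cons big_cons => /orP [/eqP ->|Hx].
  by rewrite lerDl sum_ge0_mem // => x Hx; apply: H; rewrite in_cons Hx orbT.
rewrite -[F x0]add0r lerD //; first by apply: H; rewrite in_cons eqxx.
by apply: IH => // x Hx'; apply: H; rewrite in_cons Hx' orbT.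
Qed.

Lemma key (s : seq T) (c : T -> R) (e : T -> nat) (N : nat) :
  (forall x, x \in s -> 0 <= c x) ->
  (forall x, x \in s -> (0 < e x < N)%N) ->
  (exists2 x, x \in s & 0 < c x) ->
  let p := 'X^N - \sum_(x <- s) c x *: 'X^(e x) in
  0 < Croot p /\ forall k, Croot p <= k -> \sum_(x <- s) c x * k ^+ e x <= k ^+ N.
Proof.
move=> Hc He [x0 x0s cx0] p.
pose h t := \sum_(x <- s) c x / t ^+ (N - e x).
have hp : forall t, 0 < t -> p.[t] = t ^+ N * (1 - h t).
  move=> t t0; rewrite /p hornerD hornerN horner_sum hornerXn mulrBr mulr1.
  congr (_ - _); rewrite /h mulr_sumr big_seq [RHS]big_seq; apply: eq_bigr => x xs.
  rewrite hornerZ hornerXn.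
  have /andP [_ /ltnW eN] := He x xs.
  rewrite -{1}(subnK eN) exprD; field.
  by rewrite expf_neq0 // gt_eqF.
have hmono : forall t u, 0 < t -> t <= u -> h u <= h t.
  move=> t u t0 tu; rewrite /h big_seq [X in _ <= X]big_seq; apply: ler_sum => x xs.
  apply: ler_wpM2l; first exact: Hc.
  rewrite lef_pV2 ?posrE ?exprn_gt0 //; last exact: lt_le_trans tu.
  by rewrite lerXn2r // nnegrE ltW // (lt_le_trans t0).
have hge : forall t x, x \in s -> 0 < t -> t <= 1 -> c x / t <= h t.
  move=> t x xs t0 t1.
  have := @le_sum_mem s (fun y => c y / t ^+ (N - e y)) x.
  move=> /(_ _ xs) H; apply: (le_trans _ (H _)); last first.
    by move=> y ys; rewrite divr_ge0 ?Hc ?exprn_ge0 // ltW.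
  apply: ler_wpM2l; first exact: Hc.
  rewrite lef_pV2 ?posrE ?exprn_gt0 //.
  have /andP [_ eN] := He x xs.
  by rewrite -{2}(expr1 t); apply: ler_wiXn2l => //; [exact: ltW | rewrite subn_gt0].
have hle : forall t, 1 <= t -> h t <= (\sum_(x <- s) c x) / t.
  move=> t t1; rewrite /h mulr_suml big_seq [X in _ <= X]big_seq; apply: ler_sum => x xs.
  apply: ler_wpM2l; first exact: Hc.
  have t0 : 0 < t by exact: lt_le_trans t1.
  rewrite lef_pV2 ?posrE ?exprn_gt0 //.
  have /andP [_ eN] := He x xs.
  by apply: ler_eXnr => //; rewrite subn_gt0.
pose t0 := Num.min 1 (c x0 / 2).
have t0p : 0 < t0 by rewrite lt_min ltr01 divr_gt0.
have t01 : t0 <= 1 by rewrite ge_min lexx.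
have t0c : t0 <= c x0 / 2 by rewrite ge_min lexx orbT.
have pt0 : p.[t0] <= 0.
  rewrite hp // pmulr_rle0 ?exprn_gt0 // subr_le0.
  apply: (le_trans _ (hge _ _ x0s t0p t01)).
  rewrite ler_pdivlMr // -ler_pdivlMl //.
  rewrite invr1 mul1r; apply: (le_trans t0c); rewrite ler_pdivrMr // ler_peMr // ?ltW //.
  by rewrite ltr1n.
pose M := 1 + \sum_(x <- s) c x.
have sc0 : 0 <= \sum_(x <- s) c x by apply: sum_ge0_mem.
have M1 : 1 <= M by rewrite lerDl.
have M0 : 0 < M by exact: lt_le_trans M1.
have pM : 0 <= p.[M].
  rewrite hp // pmulr_rge0 ?exprn_gt0 // subr_ge0.
  apply: le_trans (hle _ M1) _.
  by rewrite ler_pdivrMr // mul1r /M lerDr.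
have HH : p.[t0] <= 0 <= p.[M] by rewrite pt0 pM.
have [r /andP [r1 r2] rr] := poly_ivt (le_trans t01 M1) HH.
pose P : set R := fun t => 0 < t /\ root p t.
have Hex : exists t, P t.
  by exists r; split => //; exact: lt_le_trans r1.
have [C0 CR] : P (Croot p) by exact: (xgetPex 0 Hex).
have hC : h (Croot p) = 1.
  move: CR; rewrite /root hp // mulf_eq0 expf_eq0 (gt_eqF C0) andbF /=.
  by rewrite subr_eq0 => /eqP <-.
split => // k Ck.
have k0 : 0 < k by exact: lt_le_trans Ck.
have : 0 <= p.[k].
  rewrite hp // pmulr_rge0 ?exprn_gt0 // subr_ge0 -hC; exact: hmono.
rewrite /p hornerD hornerN horner_sum hornerXn subr_ge0.
by under eq_bigr do rewrite hornerZ hornerXn.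
Qed.
End Key.
Section H.
Variable R : realType.

Lemma powR_prod (n : nat) (F : 'I_n -> R) r :
  (forall i, 0 <= F i) -> powR (\prod_(i < n) F i) r = \prod_(i < n) powR (F i) r.
Proof.
move=> H.
pose K (x y : R) := 0 <= x /\ powR x r = y.
suff [] : K (\prod_(i < n) F i) (\prod_(i < n) powR (F i) r) by [].
apply: (big_rec2 K); first by split; [exact: ler01 | rewrite powR1].
move=> i x y _ [x0 <-]; split; first by rewrite mulr_ge0.
by rewrite powRM.
Qed.

Lemma powR_root (X : R) (j : nat) : 0 <= X -> (0 < j)%N ->
  powR (X ^+ j) (j%:R)^-1 = X.
Proof.
move=> X0 j0; rewrite -powR_mulrn // -powRrM mulfV ?powRr1 //.
by rewrite pnatr_eq0 -lt0n.
Qed.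

Lemma per_i (L D : R) (ai m N : nat) : 0 < L -> (m <= N)%N -> N%:R = D -> D != 0 ->
  (powR L (-(m%:R / D)) * L) ^+ ai * (powR (L ^- ai) D^-1) ^+ (N - m) = 1.
Proof.
move=> L0 mN ND D0.
have L0' : L != 0 by rewrite gt_eqF.
have E1 : powR L (-(m%:R / D)) * L = powR L (-(m%:R / D) + 1).
  by rewrite powRD ?L0' ?implybT // powRr1 // ltW.
rewrite E1 -powR_invn ?ltW // -powRrM.
rewrite -!powR_mulrn ?powR_ge0 // -!powRrM -powRD ?L0' ?implybT //.
suff -> : (- (m%:R / D) + 1) * ai%:R + (1 *- ai * D^-1 * (N - m)%:R) = 0 by rewrite powRr0.
rewrite natrB // ND -mulNrn; by field.
Qed.
End H.

Section H2.
Variable R : realType.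
Lemma ratio_eq (F D S K Pq P : R) (m j N : nat) : N = (m + j)%N ->
  F != 0 -> D != 0 -> S != 0 -> K != 0 -> Pq * P ^+ j = 1 ->
  F ^+ N * S / (D ^+ N * (S * (D^-1 * F / K ^+ j) ^+ m * Pq)) = (F * K ^+ m * P / D) ^+ j.
Proof.
move=> -> F0 D0 S0 K0 HP.
have P0 : P ^+ j != 0 by apply/eqP => E; move: HP; rewrite E mulr0 => /eqP; rewrite eq_sym oner_eq0.
have -> : Pq = (P ^+ j)^-1 by rewrite -[Pq]mulr1 -(mulfV P0) mulrA HP mul1r.
rewrite !exprMn !exprVn !exprD exprAC.
have h1 : F ^+ m != 0 by rewrite expf_neq0.
have h2 : F ^+ j != 0 by rewrite expf_neq0.
have h3 : D ^+ m != 0 by rewrite expf_neq0.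
have h4 : D ^+ j != 0 by rewrite expf_neq0.
have h5 : K ^+ m ^+ j != 0 by rewrite !expf_neq0.
move: h1 h2 h3 h4 h5 P0.
move: (F ^+ m) (F ^+ j) (D ^+ m) (D ^+ j) (K ^+ m ^+ j) (P ^+ j) => a b c e g h h1 h2 h3 h4 h5 P0.
by field; rewrite ?h1 ?h2 ?h3 ?h4 ?h5 ?P0 ?S0.
Qed.
End H2.

Lemma prod3 (R : realType) (n : nat) (F G H : 'I_n -> R) (e : 'I_n -> nat) :
  \prod_(i < n) (F i * G i * H i) ^+ e i =
  (\prod_(i < n) F i ^+ e i) * (\prod_(i < n) G i ^+ e i) * (\prod_(i < n) H i ^+ e i).
Proof. by rewrite -!big_split; apply: eq_bigr => i _; rewrite !exprMn. Qed.

Theorem corollary4p1 (R : realType) (n d : nat) (f : mpoly.mpoly n R) (k : R) :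
  (0 < d)%N ->
  msize f = (2 * d).+1 ->
  (forall a, a \in Delta f d -> (mabs a < 2 * d)%N) ->
  (forall i : 'I_n, 0 < flead f d i) ->
  (forall i : 'I_n, Croot (Cpoly f d i) <= k) ->
  ((rL f d k)%:E <= f_gp f d)%E.
Proof.
move=> d0 _ HD HL Hk.
have Dsupp : forall a, a \in Delta f d -> [/\ fcoef f a != 0, (0 < mabs a)%N & (mabs a < 2 * d)%N].
  move=> a aD; have := aD; rewrite /Delta mem_filter => /andP [/andP [/and3P [H1 H2 _] _] _].
  split; last exact: HD.
  - by rewrite /fcoef -mcoeff_msupp.
  - by rewrite lt0n /mabs mdeg_eq0.
pose cp (i : 'I_n) (a : mpoly.multinom n) := ((2 * d)%:R)^-1 * (a i)%:R * `|fcoef f a|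
        * powR (flead f d i) (- ((mabs a)%:R / (2 * d)%:R)) : R.
have D0 : 0 < (2 * d)%:R :> R by rewrite ltr0n muln_gt0 d0.
have cp0 : forall i a, 0 <= cp i a.
  move=> i a; rewrite /cp !mulr_ge0 ?powR_ge0 ?invr_ge0 ?ler0n ?normr_ge0 ?ltW //.
have cpp : forall i a, a \in Delta f d -> (0 < a i)%N -> 0 < cp i a.
  move=> i a aD ai; have [F0 _ _] := Dsupp a aD.
  rewrite /cp !mulr_gt0 ?powR_gt0 ?invr_gt0 ?normr_gt0 ?ltr0n ?muln_gt0 ?d0 //.
have keyi : forall i a, a \in Delta f d -> (0 < a i)%N ->
    0 < Croot (Cpoly f d i) /\ forall k, Croot (Cpoly f d i) <= k ->
      \sum_(x <- Delta f d) cp i x * k ^+ mabs x <= k ^+ (2 * d).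
  move=> i a aD ai.
  have := @key R _ (Delta f d) (cp i) (@mabs n) (2 * d) (fun x _ => cp0 i x) _ _.
  apply.
  - by move=> x xD; have [_ -> ->] := Dsupp x xD.
  - by exists a => //; exact: cpp.
have kpos : forall a, a \in Delta f d -> 0 < k.
  move=> a aD; have [_ ma _] := Dsupp a aD.
  case: (pickP (fun i => (0 < a i)%N)) => [i ai|H0].
    by have [C0 _] := keyi i a aD ai; exact: lt_le_trans (Hk i).
  exfalso; move: ma; rewrite /mabs mdegE big1 // => i _.
  by move: (H0 i) => /= /negbT; rewrite lt0n negbK => /eqP.
have Hsum : forall i, \sum_(x <- Delta f d) cp i x * k ^+ mabs x <= k ^+ (2 * d).
  move=> i; case: (boolP (has (fun a : mpoly.multinom n => 0 < a i)%N (Delta f d))) => [/hasP [a aD ai]|Hn].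
    by have [_ H] := keyi i a aD ai; exact: H (Hk i).
  rewrite big_seq big1; first by rewrite mulnC exprM sqr_ge0.
  move=> a aD; have : ~~ (0 < a i)%N by apply: contra Hn => ai; apply/hasP; exists a.
  by rewrite lt0n negbK /cp => /eqP ->; rewrite mulr0 !mul0r.
pose A (a : mpoly.multinom n) (i : 'I_n) : R :=
  (a i)%:R * (((2 * d)%:R)^-1 * `|fcoef f a| / k ^+ (2 * d - mabs a))
   * (powR (flead f d i) (- ((mabs a)%:R / (2 * d)%:R)) * flead f d i).
have feas : gp_feasible f d (rL f d k).
  exists A; split; [|split; [|split]].
  - move=> a aD i; have k0 := kpos a aD; have [F0 _ _] := Dsupp a aD.
    have cQ : 0 < (((2 * d)%:R)^-1 * `|fcoef f a| / k ^+ (2 * d - mabs a))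
       * (powR (flead f d i) (- ((mabs a)%:R / (2 * d)%:R)) * flead f d i).
      by rewrite !mulr_gt0 ?invr_gt0 ?normr_gt0 ?exprn_gt0 ?powR_gt0.
    rewrite /A -mulrA; split; first by rewrite mulr_ge0 ?ler0n ?ltW.
    split; last by move=> ->; rewrite mul0r.
    by move/eqP; rewrite mulf_eq0 (gt_eqF cQ) orbF pnatr_eq0 => /eqP.
  - by move=> a aD ma; have := HD a aD; rewrite ma ltnn.
  - move=> i; case E: (Delta f d) => [|a0 s']; first by rewrite big_nil ltW.
    have k0 : 0 < k by apply: (kpos a0); rewrite E mem_head.
    rewrite -E.
    have -> : \sum_(a <- Delta f d) A a i
        = flead f d i / k ^+ (2 * d) * \sum_(a <- Delta f d) cp i a * k ^+ mabs a.
      rewrite mulr_sumr big_seq [RHS]big_seq; apply: eq_bigr => a aD.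
      have [_ _ ma] := Dsupp a aD.
      have -> : k ^+ (2 * d) = k ^+ (2 * d - mabs a) * k ^+ (mabs a).
        by rewrite -exprD subnK // ltnW.
      have h1 : k ^+ (2 * d - mabs a) != 0 by rewrite expf_neq0 ?gt_eqF.
      have h2 : k ^+ (mabs a) != 0 by rewrite expf_neq0 ?gt_eqF.
      rewrite /A /cp; move: h1 h2.
      move: (k ^+ (2 * d - mabs a)) (k ^+ (mabs a)) => u v h1 h2.
      move: (powR (flead f d i) (- ((mabs a)%:R / (2 * d)%:R))) (flead f d i) (`|fcoef f a|) ((a i)%:R : R) => w x y z. field; rewrite h1 h2 pnatr_eq0 -lt0n d0 //.
    rewrite mulrAC ler_pdivrMr ?exprn_gt0 // ler_pM2l //; exact: Hsum.
  - rewrite /rL opprB addrCA subrr addr0.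
    rewrite big_seq_cond (eq_bigl (fun a => a \in Delta f d)); last first.
      by move=> a /=; apply/andb_idr => aD; exact: HD.
    rewrite mulr_sumr [X in _ <= X]big_seq.
    apply: ler_sum => a aD.
    rewrite le_eqVlt; apply/orP; left; apply/eqP.
    have k0 := kpos a aD; have [F0 mpos ma] := Dsupp a aD.
    set j := (2 * d - mabs a)%N.
    have j0 : (0 < j)%N by rewrite subn_gt0.
    set c := ((2 * d)%:R)^-1 * `|fcoef f a| / k ^+ j.
    set Pq := \prod_(i < n) (powR (flead f d i) (- ((mabs a)%:R / (2 * d)%:R)) * flead f d i) ^+ (a i).
    set P := powR (leadinvpow f d a) ((2 * d)%:R)^-1.
    have mon : monpow (A a) a = selfpow a * c ^+ mabs a * Pq.
      rewrite /monpow /selfpow /monpow /A.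
      rewrite (@prod3 R n (fun i => (a i)%:R) (fun _ => c)
         (fun i => powR (flead f d i) (- ((mabs a)%:R / (2 * d)%:R)) * flead f d i)).
      by rewrite prodrXr -mdegE.
    have Pq1 : Pq * P ^+ j = 1.
      rewrite /P /leadinvpow powR_prod; last by move=> i; rewrite invr_ge0 exprn_ge0 // ltW.
      rewrite -prodrXl -big_split big1 // => i _.
      by apply: per_i; [exact: HL | exact: ltnW | by [] | by rewrite pnatr_eq0 -lt0n muln_gt0 d0].
    have S0 : selfpow (R:=R) a != 0.
      suff H : 0 < selfpow (R:=R) a by rewrite (gt_eqF H).
      rewrite /selfpow /monpow; apply: prodr_gt0 => i _.
      case: (posnP (a i)) => [->|ai]; first by rewrite expr0 ltr01.
      by rewrite exprn_gt0 // ltr0n.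
    have HN : (2 * d)%N = (mabs a + j)%N by rewrite subnKC // ltnW.
    have FF : `|fcoef f a| != 0 by rewrite normr_eq0.
    have DD : (2 * d)%:R != 0 :> R by rewrite gt_eqF.
    have KK : k != 0 by rewrite gt_eqF.
    rewrite mon (@ratio_eq R _ _ _ _ _ _ _ _ _ HN FF DD S0 KK Pq1).
    rewrite powR_root //; last by rewrite !mulr_ge0 ?normr_ge0 ?exprn_ge0 ?powR_ge0 ?invr_ge0 ?ltW.
    clear Pq1; move: (`|fcoef f a|) (k ^+ mabs a) P ((2 * d)%:R : R) (j%:R : R) => u v w x y.
    by ring.
apply: ereal_sup_ubound; exists (rL f d k) => //.
Qed.
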